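(* Let $V$ be a real vector space with a $\sigma$-algebra $\mathcal{B}$ for which every finite-dimensional hyperplane $H=x+T:=\{x+u:u\in T\}$ ($x\in V$, $T$ a finite-dimensional vector subspace) is measurable. Let $Q$ be a probability measure on $\mathcal{B}$ and for $j=0,1,2,\dots$ let $\mathcal{H}_j$ be the collection of all $j$-dimensional hyperplanes in $V$. Then for each $j=0,1,2,\dots$, for any infinite sequence $\{C_i\}$ of distinct hyperplanes in $\mathcal{H}_j$ such that $Q(C_i)$ converges, its limit equals $Q(F)$ for some hyperplane $F$ of dimension less than $j$ such that $F\subset C_i$ for infinitely many $i$. In particular, $Q(C_i)$ cannot be strictly increasing. The same statements hold with finite-dimensional vector subspaces in place of hyperplanes.
   Context: Hyperplanes of dimension $0$ are singletons $\{x\}$; the empty set $\emptyset$ is considered a hyperplane of dimension $-1$. *)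

(* Defs.v *)
From HB Require Import structures.
From mathcomp Require Import all_boot all_order all_algebra.
From mathcomp Require Import all_classical all_reals.
From mathcomp Require Import topology normedtype sequences measure.
Set Implicit Arguments. Unset Strict Implicit. Unset Printing Implicit Defensive.
Import Order.TTheory GRing.Theory Num.Theory.
Import numFieldNormedType.Exports.
Local Open Scope classical_set_scope.
Local Open Scope ring_scope.

Definition subspace_dim (R : realType) (V : lmodType R) (j : nat) (T : set V) :=
  exists v : 'I_j -> V,
    (forall c : 'I_j -> R, \sum_(i < j) c i *: v i = 0 -> forall i, c i = 0) /\
    T = [set \sum_(i < j) c i *: v i | c in [set: 'I_j -> R]].

Definition hyperplane_dim (R : realType) (V : lmodType R) (j : nat) (H : set V) :=
  exists (x : V) (T : set V), subspace_dim j T /\ H = [set x + u | u in T].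

(* Hyperplane of dimension < j, where the empty set counts as the
   hyperplane of dimension -1. *)
Definition hyperplane_dim_lt (R : realType) (V : lmodType R) (j : nat) (F : set V) :=
  F = set0 \/ exists k, (k < j)%N /\ hyperplane_dim k F.

Definition subspace_dim_lt (R : realType) (V : lmodType R) (j : nat) (F : set V) :=
  exists k, (k < j)%N /\ subspace_dim k F.

Definition probability_on (R : realType) (V : Type) (B : set (set V))
    (Q : set V -> R) :=
  [/\ sigma_algebra setT B,
      forall A, B A -> 0 <= Q A,
      Q set0 = 0,
      Q setT = 1 &
      forall F : nat -> set V, (forall n, B (F n)) -> trivIset setT F ->
        (fun n => \sum_(k < n) Q (F k)) @ \oo --> Q (\bigcup_k F k)].

Definition infinitely_often (P : nat -> Prop) := forall N, exists i, (N <= i)%N /\ P i.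

(* Main.v *)
Require Import Defs.
From HB Require Import structures.
From mathcomp Require Import all_boot all_order all_algebra.
From mathcomp Require Import all_classical all_reals.
From mathcomp Require Import topology normedtype sequences measure.
From mathcomp Require Import zify ring lra.
Import Order.TTheory GRing.Theory Num.Theory.
Import numFieldNormedType.Exports.
Local Open Scope classical_set_scope.
Local Open Scope ring_scope.

Section Abs.
Context (R : realType) (T : Type) (B : set (set T)).
Hypothesis BI : forall {X Y}, B X -> B Y -> B (X `&` Y).
Hypothesis BU : forall {X Y}, B X -> B Y -> B (X `|` Y).
Hypothesis BD : forall {X Y}, B X -> B Y -> B (X `\` Y).
Hypothesis B0 : B set0.
Hypothesis BT : B setT.

Definition fa (mu : set T -> R) :=
  (forall A, B A -> 0 <= mu A) /\
  (forall A C, B A -> B C -> A `&` C = set0 -> mu (A `|` C) = mu A + mu C).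

Section FA.
Context {mu : set T -> R} (famu : fa mu).

Lemma fa0 : mu set0 = 0.
Proof.
case: famu => _ h; have := h set0 set0 B0 B0 (setI0 _).
rewrite setU0 => e.
by apply: (@addrI _ (mu set0)); rewrite addr0 -e.
Qed.

Lemma fa_split {A U} : B A -> B U -> mu A = mu (A `&` U) + mu (A `\` U).
Proof.
move=> hA hU; case: famu => _ h; rewrite -h ?setUIDK //; [exact: BI|exact: BD|].
by rewrite setDE setIACA setICr setI0.
Qed.

Lemma fa_mono {A C} : B A -> B C -> A `<=` C -> mu A <= mu C.
Proof.
move=> hA hC hAC; rewrite (fa_split hC hA) (setIidr hAC) lerDl.
by case: famu => h _; apply: h; apply: BD.
Qed.

Lemma fa_subadd {A C} : B A -> B C -> mu (A `|` C) <= mu A + mu C.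
Proof.
move=> hA hC; rewrite (fa_split (BU hA hC) hA).
have -> : (A `|` C) `&` A = A by rewrite setUK.
rewrite lerD2l; apply: (fa_mono (BD (BU hA hC) hA) hC).
by move=> x [[a|c] na].
Qed.

Lemma fa_ge0 {A} : B A -> 0 <= mu A.
Proof. by case: famu => h _; apply: h. Qed.

Lemma fa_diff {J} : B J -> fa (fun A => mu (A `\` J)).
Proof.
move=> hJ; split=> [A hA|A C hA hC hAC]; first by apply: fa_ge0; apply: BD.
rewrite setDUl; case: famu => _ h; apply: h; try exact: BD.
by apply/seteqP; split=> x // [[+ _] [+ _]] => a c; rewrite -hAC.
Qed.

End FA.

Lemma io_enum {P : nat -> Prop} : infinitely_often P ->
  exists psi : nat -> nat, (forall n, (psi n < psi n.+1)%N) /\ (forall n, P (psi n)).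
Proof.
move=> hP.
have g : forall N, {i | (N <= i)%N /\ P i} by move=> N; apply: cid; exact: hP N.
pose f N := proj1_sig (g N).
exists (fun n => iter n (fun m => f m.+1) (f 0%N)); split.
  by move=> n /=; case: (proj2_sig (g (iter n (fun m => f m.+1) (f 0%N)).+1)).
case=> [|n] /=; first by case: (proj2_sig (g 0%N)).
by case: (proj2_sig (g (iter n (fun m => f m.+1) (f 0%N)).+1)).
Qed.

Lemma inc_ge {psi : nat -> nat} : (forall n, (psi n < psi n.+1)%N) -> forall n, (n <= psi n)%N.
Proof. by move=> h; elim=> [|n ih] //; apply: leq_ltn_trans ih (h n). Qed.

Definition finmult (C : nat -> set T) := forall X, exists N, forall i, (N <= i)%N -> C i <> X.

Fixpoint Un (C : nat -> set T) (n : nat) : set T :=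
  if n is n'.+1 then Un C n' `|` C n' else set0.

Lemma BUn C n : (forall i, B (C i)) -> B (Un C n).
Proof. by move=> h; elim: n => [|n ih] //=; apply: BU. Qed.

Lemma Un_mono {C n m} : (n <= m)%N -> Un C n `<=` Un C m.
Proof.
move=> /subnK <-; elim: (m - n)%N => [|k ih] //=.

 apply: (subset_trans ih); exact: subsetUl.
Qed.

Section Rank.
Context (G : set (set T)) (rk : set T -> nat).
Hypothesis GB : forall {X}, G X -> B X.
Hypothesis GI : forall {X Y}, G X -> G Y -> G (X `&` Y).
Hypothesis rk_lt : forall {X Y}, G X -> G Y -> X `<=` Y -> X <> Y -> (rk X < rk Y)%N.

Lemma rk_le {X Y} : G X -> G Y -> X `<=` Y -> (rk X <= rk Y)%N.
Proof.
move=> GX GY XY; case: (pselect (X = Y)) => [->//|ne].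
exact: ltnW (rk_lt GX GY XY ne).
Qed.

Lemma rk_lt2 {X Y} j : G X -> G Y -> (rk X <= j)%N -> (rk Y <= j)%N -> X <> Y ->
  (rk (X `&` Y) < j)%N.
Proof.
move=> GX GY rX rY ne; case: (pselect (X `&` Y = X)) => [e|ne2].
  have XY : X `<=` Y by rewrite -e => x [].
  by rewrite e; apply: leq_trans (rk_lt GX GY XY ne) rY.
by apply: leq_trans rX; apply: rk_lt (GI GX GY) GX _ ne2 => x [].
Qed.

Lemma Wlem C p : (forall i, G (C i)) -> C p <> C 0%N ->
  exists W, [/\ G W, W `<=` C 0%N `&` C p, (forall i, W `<=` C i) &
                (forall X, (forall i, X `<=` C i) -> X `<=` W)].
Proof.
move=> hC hp.
pose I s := foldr (fun n A => A `&` C n) (C 0%N `&` C p) s.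
have GIs s : G (I s) by elim: s => [|n s ih] /=; [exact: GI|exact: GI].
have Isub s : I s `<=` C 0%N `&` C p by elim: s => [|n s ih] //= x [/ih].
have Ibig X : (forall i, X `<=` C i) -> forall s, X `<=` I s.
  move=> hX; elim=> [|n s ih] /=; first by move=> x hx; split; apply: hX.
  by move=> x hx; split; [apply: ih|apply: hX].
have ex : exists r, `[< exists s, rk (I s) = r >] by exists (rk (I [::])); apply/asboolP; exists [::].
case: (ex_minnP ex) => r /asboolP [s0 hs0] hmin.
exists (I s0); split; [exact: GIs|exact: Isub| |by move=> X hX; exact: Ibig].
move=> i; have e : I (i :: s0) = I s0.
  apply: contrapT => ne.
  have lt := rk_lt (GIs (i :: s0)) (GIs s0) (fun x (hx : I (i :: s0) x) => hx.1) ne.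
  have := hmin (rk (I (i :: s0))) (asboolT (ex_intro _ (i :: s0) erefl)).
  by rewrite -hs0 leqNgt lt.
by move=> x hx; rewrite -e in hx; case: hx.
Qed.

Definition thm (j : nat) := forall (mu : set T -> R) C a, fa mu ->
  (forall i, G (C i) /\ (rk (C i) <= j)%N) -> finmult C -> (forall i, a <= mu (C i)) ->
  exists X, [/\ G X, (rk X < j)%N, infinitely_often (fun i => X `<=` C i) & a <= mu X].


Lemma step j (IH : forall j', (j' < j)%N -> thm j') (mu : set T -> R) a (famu : fa mu) :
  forall m C J, (j - rk J <= m)%N -> G J -> (rk J < j)%N -> (forall i, J `<=` C i) ->
  (forall i, G (C i) /\ (rk (C i) <= j)%N) -> finmult C -> (forall i, a <= mu (C i)) ->
  exists X, [/\ G X, (rk X < j)%N, infinitely_often (fun i => X `<=` C i) & a <= mu X].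
Proof.
elim=> [|m IHm] C J hm GJ rJ JC hC fC ha; first by exfalso; lia.
case: (pselect (exists H, [/\ G H, (rk H < j)%N, infinitely_often (fun i => H `<=` C i)
                              & 0 < mu (H `\` J)])).
  case=> H [GH rH ioH pH].
  have [psi [psi_inc psiP]] := io_enum ioH.
  have psi_ge := inc_ge psi_inc.
  pose C' := fun n => C (psi n).
  have fC' : finmult C'.
    move=> X; have [N hN] := fC X; exists N => i hi; apply: hN.
    exact: leq_trans hi (psi_ge i).
  have [p hp] : exists p, C' p <> C' 0%N by have [N hN] := fC' (C' 0%N); exists N; apply: hN.
  have [W [GW W0p WC Wmax]] := @Wlem C' p (fun i => (hC (psi i)).1) hp.
  have JW : J `<=` W := Wmax J (fun i => JC _).
  have HW : H `<=` W := Wmax H psiP.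
  have rW : (rk W < j)%N.
    apply: leq_ltn_trans (rk_le GW (GI (hC _).1 (hC _).1) W0p) _.
    by apply: rk_lt2; [exact: (hC _).1|exact: (hC _).1|exact: (hC _).2|exact: (hC _).2|exact: nesym].
  have WJ : J <> W.
    move=> e; move: pH; rewrite ltNge => /negP; apply.
    have : mu (H `\` J) <= mu (W `\` J).
      apply: (fa_mono famu); try apply: BD; try exact: GB.
      by move=> x [hx nx]; split=> //; apply: HW.
    by rewrite -e setDv (fa0 famu).
  have rJW := rk_lt GJ GW JW WJ.
  have [X [GX rX ioX aX]] := IHm C' W ltac:(lia) GW rW WC (fun i => hC (psi i)) fC' (fun i => ha _).
  exists X; split => // N; have [i [hi Xi]] := ioX N; exists (psi i); split => //.
  exact: leq_trans hi (psi_ge i).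
move=> hB.
have hB' : forall H, G H -> (rk H < j)%N -> infinitely_often (fun i => H `<=` C i) ->
    mu (H `\` J) <= 0.
  move=> H GH rH ioH; rewrite leNgt; apply/negP => pos; apply: hB; exists H; by split.
exists J; split => //; first by move=> N; exists N; split.
rewrite leNgt; apply/negP => aJ.
pose nu := fun A => mu (A `\` J).
have fanu : fa nu := fa_diff famu (GB GJ).
pose a' := a - mu J.
have a'0 : 0 < a' by rewrite subr_gt0.
have BC i : B (C i) := GB (hC i).1.
have nuC i : a' <= nu (C i).
  have := fa_split famu (BC i) (GB GJ); rewrite (setIidr (JC i)) => e.
  rewrite /a' /nu; have := ha i; rewrite e; lra.
have zero : forall k eta, 0 < eta -> exists I, forall i, (I <= i)%N -> nu (C i `&` C k) < eta.
  move=> k eta eta0; apply: contrapT => hno.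
  have io1 : infinitely_often (fun i => eta <= nu (C i `&` C k) /\ C i <> C k).
    move=> N; have [Nk hNk] := fC (C k).
    apply: contrapT => hn; apply: hno; exists (maxn N Nk) => i hi.
    rewrite ltNge; apply/negP => hle; apply: hn; exists i; split; first by lia.
    by split=> //; apply: hNk; lia.
  have [psi [psi_inc psiP]] := io_enum io1.
  have psi_ge := inc_ge psi_inc.
  pose D := fun n => C (psi n) `&` C k.
  have GD n : G (D n) := GI (hC _).1 (hC k).1.
  have rD n : (rk (D n) < j)%N := rk_lt2 j (hC _).1 (hC k).1 (hC _).2 (hC k).2 (psiP n).2.
  have ioD : forall X, infinitely_often (fun n => X `<=` D n) ->
      infinitely_often (fun i => X `<=` C i).
    move=> X ioX N; have [n [hn Xn]] := ioX N; exists (psi n); split.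
      exact: leq_trans hn (psi_ge n).
    by move=> x /Xn [].
  case: (pselect (exists X, infinitely_often (fun n => D n = X))).
    case=> X ioX; have [n0 [_ e0]] := ioX 0%N.
    have : nu X <= 0.
      apply: hB'; [by rewrite -e0|by rewrite -e0|].
      by apply: ioD => N; have [n [hn en]] := ioX N; exists n; split=> //; rewrite en.
    rewrite -e0; have := (psiP n0).1; rewrite /D; lra.
  move=> nX.
  have fD : finmult D.
    move=> X; apply: contrapT => h; apply: nX; exists X => N; apply: contrapT => h2.
    by apply: h; exists N => i hi e; apply: h2; exists i.
  have j0 : (0 < j)%N := leq_ltn_trans (leq0n _) (rD 0%N).
  have [j' ej] : exists j', j = j'.+1 by exists j.-1; rewrite prednK.
  have jj : (j' < j)%N by rewrite ej.
  have rD' n : (rk (D n) <= j')%N by have := rD n; rewrite ej.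
  have [H [GH rH ioH eH]] := IH j' jj nu D eta fanu
    (fun n => conj (GD n) (rD' n)) fD (fun n => (psiP n).1).
  have := hB' H GH ltac:(lia) (ioD H ioH); rewrite -/(nu H); lra.
have zeroN : forall eta, 0 < eta -> forall N, exists I, forall i, (I <= i)%N ->
    forall k, (k < N)%N -> nu (C i `&` C k) < eta.
  move=> eta eta0; elim=> [|N [I1 h1]]; first by exists 0%N.
  have [I2 h2] := zero N eta eta0; exists (maxn I1 I2) => i hi k hk.
  case: (ltngtP k N) => hkN; [apply: h1 => //; lia|lia|rewrite hkN; apply: h2; lia].
have BU' n : B (Un C n) := BUn C n BC.
pose E := range (fun n => nu (Un C n)).
have hsE : has_sup E.
  split; first by exists (nu (Un C 0%N)), 0%N.
  exists (nu setT) => _ [n _ <-]; apply: (fa_mono fanu) => //.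
pose eps := a' / 2.
have eps0 : 0 < eps by rewrite /eps divr_gt0.
have [e [N _ eN] hN] := sup_adherent eps0 hsE.
have small : forall i, nu (C i `\` Un C N) < eps.
  move=> i.
  have e1 := fa_split fanu (BU (BU' N) (BC i)) (BU' N).
  have e2 : (Un C N `|` C i) `\` Un C N = C i `\` Un C N.
    by rewrite setDUl setDv set0U.
  rewrite setUK e2 in e1.
  have le1 : nu (Un C N `|` C i) <= sup E.
    apply: le_trans (sup_upper_bound hsE (ex_intro2 _ _ (maxn N i.+1) I erefl)).
    apply: (fa_mono fanu) => //; first exact: BU.
    move=> x [hx|hx].
      exact: (Un_mono (leq_maxl N i.+1)).
    by apply: (Un_mono (leq_maxr N i.+1)); right.
  move: hN le1; rewrite e1 -eN; lra.
pose eta := eps / (N.+1)%:R.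
have eta0 : 0 < eta by rewrite /eta divr_gt0 // ltr0n.
have [I hI] := zeroN eta eta0 N.
have bound : forall M, (M <= N)%N -> nu (C I `&` Un C M) <= M%:R * eta.
  elim=> [|M ihM] hM /=; first by rewrite mul0r setI0 (fa0 fanu).
  rewrite setIUr; apply: le_trans (fa_subadd fanu _ _) _; try apply: BI => //.
  rewrite -addn1 natrD mulrDl mul1r; apply: lerD; first by apply: ihM; lia.
  by apply: ltW; apply: hI => //; lia.
have := nuC I; rewrite (fa_split fanu (BC I) (BU' N)).
have := bound N (leqnn N); have := small I.
have : N%:R * eta + eta = eps.
  rewrite /eta -{2}(mul1r (eps / _)) -mulrDl -natr1 mulrC -mulrA mulVf ?mulr1 //.
  by rewrite natr1 pnatr_eq0.
have : 0 < eta := eta0.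
rewrite /eps; lra.
Qed.

Lemma mainthm j : thm j.
Proof.
elim/ltn_ind: j => j IH mu C a famu hC fC ha.
have [p hp] : exists p, C p <> C 0%N by have [N hN] := fC (C 0%N); exists N; apply: hN.
have [W [GW W0p WC Wmax]] := @Wlem C p (fun i => (hC i).1) hp.
have rW : (rk W < j)%N.
  apply: leq_ltn_trans (rk_le GW (GI (hC _).1 (hC _).1) W0p) _.
  by apply: rk_lt2; [exact: (hC _).1|exact: (hC _).1|exact: (hC _).2|exact: (hC _).2|exact: nesym].
exact: (@step j IH mu a famu (j - rk W)%N C W (leqnn _) GW rW WC hC fC ha).
Qed.


Lemma lim_ge (l x : R) : (forall e, 0 < e -> l - e <= x) -> l <= x.
Proof. by move=> h; apply/ler_addgt0Pr => e e0; have := h e e0; lra. Qed.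

Lemma archi_inv {e : R} : 0 < e -> exists M : nat, forall n, (M <= n)%N -> ((n.+1)%:R)^-1 <= e.
Proof.
move=> e0; have ie0 : 0 <= e^-1 by rewrite invr_ge0 ltW.
have := archi_boundP ie0; set k := Num.Def.archi_bound _ => hk.
exists k => n hn; rewrite invf_ple ?posrE ?ltr0n //.
apply: ltW; apply: lt_le_trans hk _; rewrite ler_nat; lia.
Qed.

Lemma attain (Q : set T -> R) (faQ : fa Q) j C l : forall r (Gs : nat -> set T),
  (forall m, [/\ G (Gs m), (rk (Gs m) < j)%N, infinitely_often (fun i => Gs m `<=` C i)
               & (rk (Gs m) <= r)%N]) ->
  (forall e, 0 < e -> exists M, forall m, (M <= m)%N -> l - e <= Q (Gs m)) ->
  exists X, [/\ G X, (rk X < j)%N, infinitely_often (fun i => X `<=` C i) & l <= Q X].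
Proof.
elim/ltn_ind => r IHr Gs hGs hl.
case: (pselect (exists X, infinitely_often (fun m => Gs m = X))).
  case=> X ioX; have [m0 [_ e0]] := ioX 0%N.
  have [G1 G2 G3 _] := hGs m0; exists X; rewrite -e0; split => //.
  apply: lim_ge => e e0'; have [M hM] := hl e e0'; have [m [hm em]] := ioX M.
  by rewrite e0 -em; apply: hM.
move=> nX.
have fG : finmult Gs.
  move=> X; apply: contrapT => h; apply: nX; exists X => N; apply: contrapT => h2.
  by apply: h; exists N => i hi e; apply: h2; exists i.
have hH : forall e, 0 < e -> exists H, [/\ G H, (rk H < j)%N,
    infinitely_often (fun i => H `<=` C i), (rk H < r)%N & l - e <= Q H].
  move=> e e0; have [M hM] := hl e e0.
  pose Gs' m := Gs (m + M)%N.
  have fG' : finmult Gs'.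
    by move=> X; have [N hN] := fG X; exists N => i hi; apply: hN; lia.
  have [X [GX rX ioX aX]] := mainthm r Q Gs' (l - e) faQ (fun m => let: And4 a _ _ d := hGs (m + M)%N in conj a d)
    fG' (fun m => hM _ (leq_addl _ _)).
  have [m [_ Xm]] := ioX 0%N.
  have [G1 G2 G3 _] := hGs (m + M)%N.
  exists X; split => //.
    exact: leq_ltn_trans (rk_le GX G1 Xm) G2.
  move=> N; have [i [hi hi2]] := G3 N; exists i; split => //.
  exact: subset_trans Xm hi2.
have [H1 [_ _ _ rH1 _]] := hH 1 ltr01.
have [r' er] : exists r', r = r'.+1 by exists r.-1; rewrite prednK //; lia.
have hs : forall n : nat, {H | [/\ G H, (rk H < j)%N,
    infinitely_often (fun i => H `<=` C i), (rk H < r)%N & l - ((n.+1)%:R)^-1 <= Q H]}.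
  by move=> n; apply: cid; apply: hH; rewrite invr_gt0 ltr0n.
pose Hs n := proj1_sig (hs n).
apply: (IHr r' _ Hs).
- lia.
- move=> m; have [G1 G2 G3 G4 _] := proj2_sig (hs m); split => //.
  rewrite /Hs; lia.
- move=> e e0; have [M hM] := archi_inv e0; exists M => m hm.
  have [_ _ _ _ G5] := proj2_sig (hs m); apply: le_trans G5.
  by have := hM m hm; rewrite lerD2l lerN2.
Qed.

Theorem abs_final (Q : set T -> R) (faQ : fa Q) j C :
  (forall i, G (C i) /\ (rk (C i) <= j)%N) -> injective C ->
  (forall l, (fun i => Q (C i)) @ \oo --> l ->
     exists X, [/\ G X, (rk X < j)%N, infinitely_often (fun i => X `<=` C i) & l = Q X]) /\
  ~ (forall i, Q (C i) < Q (C i.+1)).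
Proof.
move=> hC injC.
have fC : forall N, finmult (fun i => C (i + N)%N).
  move=> N X; case: (pselect (exists i, C i = X)) => [[i0 <-]|nx].
    exists i0.+1 => i hi /injC; lia.
  by exists 0%N => i _ e; apply: nx; exists (i + N)%N.
have part1 : forall l, (fun i => Q (C i)) @ \oo --> l ->
     exists X, [/\ G X, (rk X < j)%N, infinitely_often (fun i => X `<=` C i) & l = Q X].
  move=> l hl.
  have ev : forall e, 0 < e -> exists N, forall i, (N <= i)%N -> `|l - Q (C i)| < e.
    move=> e e0; have := (cvgrPdist_lt _ _).1 hl e e0.
    by case=> N _ hN; exists N => i hi; exact: hN.
  have hX : forall e, 0 < e -> exists X, [/\ G X, (rk X < j)%N,
      infinitely_often (fun i => X `<=` C i), (rk X <= j)%N & l - e <= Q X].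
    move=> e e0; have [N hN] := ev e e0.
    have [X [GX rX ioX aX]] := mainthm j Q (fun i => C (i + N)%N) (l - e) faQ (fun m => hC (m + N)%N) (fC N)
      (fun m => ltac:(have := hN (m + N)%N (leq_addl _ _);
                                   rewrite ltr_norml; lra)).
    exists X; split => //; last exact: ltnW.
    move=> M; have [i [hi hi2]] := ioX M; exists (i + N)%N; split => //; lia.
  have hs : forall n : nat, {X | [/\ G X, (rk X < j)%N,
      infinitely_often (fun i => X `<=` C i), (rk X <= j)%N & l - ((n.+1)%:R)^-1 <= Q X]}.
    by move=> n; apply: cid; apply: hX; rewrite invr_gt0 ltr0n.
  have [X [GX rX ioX lX]] : exists X, [/\ G X, (rk X < j)%N,
      infinitely_often (fun i => X `<=` C i) & l <= Q X].
    apply: (@attain Q faQ j C l j (fun n => proj1_sig (hs n))).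
      by move=> m; have [G1 G2 G3 G4 _] := proj2_sig (hs m); split.
    move=> e e0; have [M hM] := archi_inv e0; exists M => m hm.
    have [_ _ _ _ G5] := proj2_sig (hs m); apply: le_trans G5.
    by have := hM m hm; rewrite lerD2l lerN2.
  exists X; split => //; apply/eqP; rewrite eq_le lX /=.
  apply/ler_addgt0Pr => e e0; have [N hN] := ev e e0.
  have [i [hi Xi]] := ioX N.
  have := fa_mono faQ (GB GX) (GB (hC i).1) Xi.
  by have := hN i hi; rewrite ltr_norml; lra.
split => // inc.
have homo : {homo (fun i => Q (C i)) : n m / (n <= m)%N >-> n <= m}.
  by apply: homo_leq => [x|y x z|i]; [exact: lexx|exact: le_trans|exact: ltW].
have ub : has_ubound (range (fun i => Q (C i))).
  exists (Q setT) => _ [i _ <-]; apply: (fa_mono faQ) => //; exact: GB (hC i).1.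
have [X [GX rX ioX eX]] := part1 _ (nondecreasing_cvgn homo ub).
have [i [_ Xi]] := ioX 0%N.
have h1 := fa_mono faQ (GB GX) (GB (hC i).1) Xi.
have h2 := inc i.
have h3 : Q (C i.+1) <= sup (range (fun i => Q (C i))).
  by apply: ub_le_sup => //; exists i.+1.
move: h1 h2 h3; rewrite -eX; lra.
Qed.

End Rank.
End Abs.
Section Geo.
Context {R : realType} {V : lmodType R}.

Definition span {k} (v : 'I_k -> V) : set V :=
  [set \sum_(i < k) c i *: v i | c in [set: 'I_k -> R]].
Definition indep {k} (v : 'I_k -> V) :=
  forall c : 'I_k -> R, \sum_(i < k) c i *: v i = 0 -> forall i, c i = 0.

Section Span.
Context {k : nat} (v : 'I_k -> V).

Lemma span0 : span v 0.
Proof. by exists (fun _ => 0) => //; rewrite big1 // => i _; rewrite scale0r. Qed.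

Lemma spanD x y : span v x -> span v y -> span v (x + y).
Proof.
case=> c _ <- [d _ <-]; exists (fun i => c i + d i) => //.
by rewrite -big_split; apply: eq_bigr => i _; rewrite scalerDl.
Qed.

Lemma spanZ a x : span v x -> span v (a *: x).
Proof.
case=> c _ <-; exists (fun i => a * c i) => //.
by rewrite scaler_sumr; apply: eq_bigr => i _; rewrite scalerA.
Qed.

Lemma spanB x y : span v x -> span v y -> span v (x - y).
Proof. by move=> hx hy; apply: spanD => //; rewrite -scaleN1r; apply: spanZ. Qed.

Lemma span_gen i : span v (v i).
Proof.
exists (fun l => (l == i)%:R) => //.
rewrite (bigD1 i) //= eqxx scale1r big1 ?addr0 // => l /negbTE ->.
by rewrite scale0r.
Qed.

End Span.

Lemma bound {k m} {v : 'I_k -> V} {w : 'I_m -> V} :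
  indep w -> (forall i, span v (w i)) -> (m <= k)%N.
Proof.
move=> iw hw.
have hc : forall i, {c : 'I_k -> R | \sum_l c l *: v l = w i}.
  by move=> i; apply: cid; case: (hw i) => c _ e; exists c.
pose A := \matrix_(i < m, l < k) proj1_sig (hc i) l.
have ew i : w i = \sum_l A i l *: v l.
  by rewrite -(proj2_sig (hc i)); apply: eq_bigr => l _; rewrite mxE.
have : row_free A.
  apply: inj_row_free => a haA; apply/rowP => i; rewrite mxE.
  have key : \sum_(i < m) a 0 i *: w i = 0.
    under eq_bigr do rewrite ew scaler_sumr.
    rewrite exchange_big /=.
    transitivity (\sum_l (a *m A) 0 l *: v l).
      apply: eq_bigr => l _; rewrite mxE scaler_suml; apply: eq_bigr => i0 _.
      by rewrite scalerA.
    by rewrite haA; apply: big1 => l _; rewrite mxE scale0r.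
  exact: iw (fun i => a 0 i) key i.
by rewrite /row_free => /eqP <-; apply: rank_leq_col.
Qed.

Definition ext {m} (u : 'I_m -> V) (s : V) : 'I_m.+1 -> V :=
  fun i => if unlift ord_max i is Some i' then u i' else s.

Lemma sum_ext m (c : 'I_m.+1 -> R) u s :
  \sum_(i < m.+1) c i *: ext u s i =
  \sum_(i < m) c (lift ord_max i) *: u i + c ord_max *: s.
Proof.
rewrite big_ord_recr /=; congr (_ + _); last by rewrite /ext unlift_none.
apply: eq_bigr => i _.
have -> : widen_ord (leqnSn m) i = lift ord_max i by apply: val_inj; rewrite /= /bump leqNgt ltn_ord add0n.
by rewrite /ext liftK.
Qed.

Lemma ext_indep {m} {u : 'I_m -> V} {s} : indep u -> ~ span u s -> indep (ext u s).
Proof.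
move=> iu ns c; rewrite sum_ext => e.
have cm : c ord_max = 0.
  apply: contrapT => /eqP nz; apply: ns.
  exists (fun i => - c (lift ord_max i) / c ord_max) => //.
  have e2 : \sum_(i < m) c (lift ord_max i) *: u i = - (c ord_max *: s).
    by apply/eqP; rewrite -addr_eq0 e.
  transitivity (- (c ord_max)^-1 *: \sum_(i < m) c (lift ord_max i) *: u i).
    rewrite scaler_sumr; apply: eq_bigr => i _; rewrite scalerA; congr (_ *: _).
    by rewrite mulrC mulNr mulrN.
  by rewrite e2 scaleNr scalerN opprK scalerA mulVf // scale1r.
rewrite cm scale0r addr0 in e.
have h := iu _ e.
by move=> i; case: (unliftP ord_max i) => [j ->|->] //; exact: h j.
Qed.

Lemma sub_span k (v : 'I_k -> V) (S : set V) : S 0 ->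
  (forall x y, S x -> S y -> S (x + y)) -> (forall a x, S x -> S (a *: x)) ->
  S `<=` span v -> exists m (u : 'I_m -> V), indep u /\ S = span u.
Proof.
move=> S0 SD SZ Sv.
have Sspan : forall m (u : 'I_m -> V), (forall i, S (u i)) -> span u `<=` S.
  move=> m u hu _ [c _ <-]; elim/big_ind: _ => [|x y|i _]; [exact: S0|exact: SD|].
  by apply: SZ; exact: hu.
pose P := fun m => `[< exists u : 'I_m -> V, indep u /\ forall i, S (u i) >].
have ex0 : exists m, P m.
  exists 0%N; apply/asboolP; exists (fun _ => 0); split; [by move=> ? ? []|by case].
have ub : forall m, P m -> (m <= k)%N.
  by move=> m /asboolP [u [iu hu]]; apply: (bound (v := v) iu) => i; exact: Sv (hu i).
case: (ex_maxnP ex0 ub) => m /asboolP [u [iu hu]] hmax.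
exists m, u; split => //; apply/seteqP; split; last exact: Sspan.
move=> s Ss; apply: contrapT => ns.
have hS : forall i, S (ext u s i).
  by move=> i; rewrite /ext; case: (unlift ord_max i).
have := hmax m.+1 (asboolT (ex_intro _ (ext u s) (conj (ext_indep iu ns) hS))).
by rewrite ltnn.
Qed.

Lemma sub_le {k k'} {v : 'I_k -> V} {w : 'I_k' -> V} :
  indep v -> span v `<=` span w -> (k <= k')%N.
Proof. by move=> iv hs; apply: (bound (v := w) iv) => i; apply: hs; apply: span_gen. Qed.

Lemma sub_lt {k k'} {v : 'I_k -> V} {w : 'I_k' -> V} :
  indep v -> span v `<=` span w -> span v <> span w -> (k < k')%N.
Proof.
move=> iv hs ne.
have [p [wp vp]] : exists p, span w p /\ ~ span v p.
  apply: contrapT => h; apply: ne; apply/seteqP; split => // p wp.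
  by apply: contrapT => vp; apply: h; exists p.
apply: (bound (v := w) (ext_indep iv vp)) => i; rewrite /ext; case: (unlift ord_max i) => [j|//].
by apply: hs; apply: span_gen.
Qed.

Definition aff (x : V) (S : set V) := [set x + u | u in S].

Lemma trans_eq {k} {v : 'I_k -> V} {x z} : aff x (span v) z -> aff x (span v) = aff z (span v).
Proof.
case=> t ht <-; apply/seteqP; split => _ [u hu <-].
  by exists (u - t); [apply: spanB|rewrite addrACA subrr addr0].
by exists (t + u); [apply: spanD|rewrite addrA].
Qed.

Lemma hyp_sub {k k'} {v : 'I_k -> V} {w : 'I_k' -> V} {x y} :
  aff x (span v) `<=` aff y (span w) -> span v `<=` span w.
Proof.
move=> hs.
have := hs x (ex_intro2 _ _ 0 (span0 v) (addr0 x)) => /trans_eq e.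
move=> u hu; have := hs (x + u) (ex_intro2 _ _ u hu erefl); rewrite e.
by case=> u' hu' /addrI <-.
Qed.

Lemma hyp_le {k k'} {X Y : set V} : hyperplane_dim k X -> hyperplane_dim k' Y -> X `<=` Y -> (k <= k')%N.
Proof.
case=> x [T [[v [iv ->]] ->]] [y [T' [[w [iw ->]] ->]]] hs.
exact: sub_le iv (hyp_sub hs).
Qed.

Lemma hyp_lt {k k'} {X Y : set V} : hyperplane_dim k X -> hyperplane_dim k' Y -> X `<=` Y -> X <> Y ->
  (k < k')%N.
Proof.
case=> x [T [[v [iv ->]] ->]] [y [T' [[w [iw ->]] ->]]] hs ne.
apply: sub_lt iv (hyp_sub hs) _ => e; apply: ne.
have e2 := trans_eq (hs x (ex_intro2 _ _ 0 (span0 v) (addr0 x))).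
by rewrite -[RHS]/(aff y (span w)) e2 -e.
Qed.

Lemma affI x (S1 S2 : set V) : aff x S1 `&` aff x S2 = aff x (S1 `&` S2).
Proof.
apply/seteqP; split.
  by move=> _ [[u1 h1 <-] [u2 h2 /addrI e]]; exists u1 => //; split => //; rewrite -e.
by move=> _ [u [h1 h2] <-]; split; exists u.
Qed.

Lemma spanI_sub {k k'} (v : 'I_k -> V) (w : 'I_k' -> V) :
  exists m (u : 'I_m -> V), indep u /\ span v `&` span w = span u.
Proof.
apply: (@sub_span _ v).
- by split; apply: span0.
- by move=> x y [? ?] [? ?]; split; apply: spanD.
- by move=> a x [? ?]; split; apply: spanZ.
- by move=> x [].
Qed.

Lemma hyp_I {k k'} {X Y : set V} : hyperplane_dim k X -> hyperplane_dim k' Y ->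
  X `&` Y = set0 \/ exists m, hyperplane_dim m (X `&` Y).
Proof.
case=> x [T [[v [iv ->]] ->]] [y [T' [[w [iw ->]] ->]]].
case: (pselect (exists z, (aff x (span v) `&` aff y (span w)) z)) => [[z [zx zy]]|nz].
  right; rewrite -/(aff x _) -/(aff y _) (trans_eq zx) (trans_eq zy) affI.
  have [m [u [iu e]]] := spanI_sub v w.
  by exists m, z, (span u); split; [exists u|rewrite e].
left; apply/seteqP; split => // z hz; apply: nz; by exists z.
Qed.

Lemma sub_I {k k'} {X Y : set V} : subspace_dim k X -> subspace_dim k' Y ->
  exists m, subspace_dim m (X `&` Y).
Proof.
case=> v [iv ->] [w [iw ->]].
have [m [u [iu e]]] := spanI_sub v w.
by exists m, u; split.
Qed.

Lemma sub_hyp {k} {X : set V} : subspace_dim k X -> hyperplane_dim k X.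
Proof.
move=> h; exists 0, X; split => //; apply/seteqP; split => [x hx|_ [u hu <-]].
  by exists x => //; rewrite add0r.
by rewrite add0r.
Qed.

Lemma sub_le' {k k'} {X Y : set V} : subspace_dim k X -> subspace_dim k' Y -> X `<=` Y -> (k <= k')%N.
Proof. by move=> /sub_hyp h1 /sub_hyp h2; apply: hyp_le. Qed.

Lemma sub_lt' {k k'} {X Y : set V} : subspace_dim k X -> subspace_dim k' Y -> X `<=` Y -> X <> Y ->
  (k < k')%N.
Proof. by move=> /sub_hyp h1 /sub_hyp h2; apply: hyp_lt. Qed.

Lemma hyp_ne0 {k} {X : set V} : hyperplane_dim k X -> X <> set0.
Proof.
case=> x [T [[v [iv ->]] ->]] e.
have : aff x (span v) x by exists 0; [apply: span0|rewrite addr0].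
by rewrite /aff /span e.
Qed.

End Geo.

Section Final.
Context (R : realType) (V : lmodType R) (B : set (set V)) (Q : set V -> R).
Hypothesis hQ : probability_on B Q.
Hypothesis hB : forall j H, hyperplane_dim j H -> B H.

Let sB : sigma_algebra setT B. Proof. by case: hQ. Qed.
Let B0 : B set0. Proof. by case: sB. Qed.
Let BC A : B A -> B (~` A). Proof. by case: sB => _ h _ /h; rewrite setTD. Qed.
Let BU X Y : B X -> B Y -> B (X `|` Y).
Proof.
move=> hX hY; case: sB => _ _ h.
have -> : X `|` Y = \bigcup_k (fun k => if k is 0%N then X else Y) k.
  apply/seteqP; split => [x [hx|hx]|x [[|k] _ hx]]; [by exists 0%N|by exists 1%N|by left|by right].
by apply: h => -[|k].
Qed.
Let BI X Y : B X -> B Y -> B (X `&` Y).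
Proof. by move=> hX hY; rewrite -[X `&` Y]setCK setCI; apply/BC/BU; apply: BC. Qed.
Let BD X Y : B X -> B Y -> B (X `\` Y).
Proof. by move=> hX hY; rewrite setDE; apply: BI => //; apply: BC. Qed.
Let BT : B setT. Proof. by rewrite -setC0; apply: BC. Qed.

Let faQ : fa R V B Q.
Proof.
case: hQ => _ h0 Q0 _ hadd; split => // A C hA hC hAC.
pose F := fun n => if n is 0%N then A else if n is 1%N then C else set0.
have hF n : B (F n) by case: n => [|[|n]].
have tF : trivIset setT F.
  move=> i j _ _ [x [hi hj]].
  case: i hi => [|[|i]] hi; case: j hj => [|[|j]] hj //.
  - have h : (A `&` C) x by split.
    by rewrite hAC in h.
  - have h : (A `&` C) x by split.
    by rewrite hAC in h.
have e : \bigcup_k F k = A `|` C.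
  apply/seteqP; split => [x [[|[|k]] _ hx]|x [hx|hx]]; [by left|by right|by []|by exists 0%N|by exists 1%N].
have := hadd F hF tF; rewrite e => hl.
have hs : forall n, (2 <= n)%N -> \sum_(k < n) Q (F k) = Q A + Q C.
  case=> [|[|n]] // _; rewrite !big_ord_recl /= big1 ?addr0 //.
have h2 : (fun n => \sum_(k < n) Q (F k)) @ \oo --> Q A + Q C.
  by apply: cvg_near_cst; exists 2%N => // n /= hn; apply: hs.
exact: (cvg_unique _ hl h2).
Qed.

Definition rkh (X : set V) : nat :=
  match pselect (exists k, hyperplane_dim k X) with
  | left e => (proj1_sig (cid e)).+1 | right _ => 0%N end.

Lemma rkh_spec {k X} : hyperplane_dim k X -> rkh X = k.+1.
Proof.
move=> hk; rewrite /rkh; case: pselect => [e|ne]; last by exfalso; apply: ne; exists k.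
have hk' := proj2_sig (cid e); congr (_.+1); apply/eqP; rewrite eqn_leq.
by rewrite (hyp_le hk' hk) ?(hyp_le hk hk').
Qed.

Lemma rkh0 : rkh set0 = 0%N.
Proof. by rewrite /rkh; case: pselect => // -[k hk]; exfalso; exact: (hyp_ne0 hk erefl). Qed.

Definition Gh (X : set V) := X = set0 \/ exists k, hyperplane_dim k X.

Lemma Gh_B X : Gh X -> B X. Proof. by case=> [->|[k /hB]]. Qed.

Lemma Gh_I X Y : Gh X -> Gh Y -> Gh (X `&` Y).
Proof.
case=> [->|[k hX]]; first by left; rewrite set0I.
case=> [->|[k' hY]]; first by left; rewrite setI0.
exact: hyp_I hX hY.
Qed.

Lemma Gh_lt X Y : Gh X -> Gh Y -> X `<=` Y -> X <> Y -> (rkh X < rkh Y)%N.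
Proof.
move=> hX hY XY ne; case: hY => [eY|[k' hY]].
  by exfalso; apply: ne; rewrite eY; apply/seteqP; split => // x /XY; rewrite eY.
rewrite (rkh_spec hY); case: hX => [->|[k hX]]; first by rewrite rkh0.
by rewrite (rkh_spec hX) ltnS; apply: hyp_lt hX hY XY ne.
Qed.

Definition rks (X : set V) : nat :=
  match pselect (exists k, subspace_dim k X) with
  | left e => proj1_sig (cid e) | right _ => 0%N end.

Lemma rks_spec {k X} : subspace_dim k X -> rks X = k.
Proof.
move=> hk; rewrite /rks; case: pselect => [e|ne]; last by exfalso; apply: ne; exists k.
have hk' := proj2_sig (cid e); apply/eqP; rewrite eqn_leq.
by rewrite (sub_le' hk' hk) ?(sub_le' hk hk').
Qed.

Definition Gs (X : set V) := exists k, subspace_dim k X.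

Lemma Gs_B X : Gs X -> B X. Proof. by case=> k /sub_hyp /hB. Qed.

Lemma Gs_I X Y : Gs X -> Gs Y -> Gs (X `&` Y).
Proof. by case=> k hX [k' hY]; apply: sub_I hX hY. Qed.

Lemma Gs_lt X Y : Gs X -> Gs Y -> X `<=` Y -> X <> Y -> (rks X < rks Y)%N.
Proof.
case=> k hX [k' hY] XY ne; rewrite (rks_spec hX) (rks_spec hY).
exact: sub_lt' hX hY XY ne.
Qed.

Lemma final_h (j : nat) (C : nat -> set V) :
  (forall i, hyperplane_dim j (C i)) -> injective C ->
  (forall l : R, (fun i => Q (C i)) @ \oo --> l ->
     exists F : set V, [/\ hyperplane_dim_lt j F,
                          infinitely_often (fun i => F `<=` C i) & l = Q F]) /\
  ~ (forall i, Q (C i) < Q (C i.+1)).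
Proof.
move=> hC injC.
have [h1 h2] := @abs_final R V B BI BU BD B0 BT Gh rkh Gh_B Gh_I Gh_lt Q faQ j.+1 C
  (fun i => conj (or_intror (ex_intro _ j (hC i))) (eq_leq (rkh_spec (hC i)))) injC.
split => // l hl; have [X [GX rX ioX eX]] := h1 l hl.
exists X; split => //; case: GX => [->|[k hk]]; first by left.
by right; exists k; split => //; move: rX; rewrite (rkh_spec hk).
Qed.

Lemma final_s (j : nat) (C : nat -> set V) :
  (forall i, subspace_dim j (C i)) -> injective C ->
  (forall l : R, (fun i => Q (C i)) @ \oo --> l ->
     exists F : set V, [/\ subspace_dim_lt j F,
                          infinitely_often (fun i => F `<=` C i) & l = Q F]) /\
  ~ (forall i, Q (C i) < Q (C i.+1)).
Proof.
move=> hC injC.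
have [h1 h2] := @abs_final R V B BI BU BD B0 BT Gs rks Gs_B Gs_I Gs_lt Q faQ j C
  (fun i => conj (ex_intro _ j (hC i)) (eq_leq (rks_spec (hC i)))) injC.
split => // l hl; have [X [[k hk] rX ioX eX]] := h1 l hl.
by exists X; split => //; exists k; split => //; move: rX; rewrite (rks_spec hk).
Qed.

End Final.

Theorem lemma9 (R : realType) (V : lmodType R) (B : set (set V))
    (Q : set V -> R) :
  probability_on B Q ->
  (forall (j : nat) (H : set V), hyperplane_dim j H -> B H) ->
  (forall (j : nat) (C : nat -> set V),
     (forall i, hyperplane_dim j (C i)) -> injective C ->
     (forall l : R, (fun i => Q (C i)) @ \oo --> l ->
            exists F : set V, [/\ hyperplane_dim_lt j F,
                                 infinitely_often (fun i => F `<=` C i) &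
                                 l = Q F]) /\
     ~ (forall i, Q (C i) < Q (C i.+1))) /\
  (forall (j : nat) (C : nat -> set V),
     (forall i, subspace_dim j (C i)) -> injective C ->
     (forall l : R, (fun i => Q (C i)) @ \oo --> l ->
        exists F : set V, [/\ subspace_dim_lt j F,
                             infinitely_often (fun i => F `<=` C i) &
                             l = Q F]) /\
     ~ (forall i, Q (C i) < Q (C i.+1))).
Proof.
move=> hQ hB; split => j C hC injC.
  exact: final_h hQ hB j C hC injC.
exact: final_s hQ hB j C hC injC.
Qed.
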